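(* Let $\mathbb{F}_2$ be the free group on generators $a,b$, let $\ell\colon \mathbb{F}_2\to\mathbb{N}$ be the word length with respect to $\{a,a^{-1},b,b^{-1}\}$, let $\gamma_n(\mathbb{F}_2)$ denote the $n$-th term of the lower central series ($\gamma_1(\mathbb{F}_2)=\mathbb{F}_2$, $\gamma_{n+1}(\mathbb{F}_2)=[\gamma_n(\mathbb{F}_2),\mathbb{F}_2]$), and set $\alpha(n):=\min\{\ell(w)\mid w\in\gamma_n(\mathbb{F}_2)\setminus\{e\}\}$ and $\alpha:=\lim_{n\to\infty}\frac{\log_2(\alpha(n))}{\log_2(n)}$. Then $$\alpha\le \log_{\varphi}(2)=1.440\ldots,$$ where $\varphi=\frac{1+\sqrt5}{2}$ is the golden ratio; equivalently, $\alpha(n)\preceq n^{\log_\varphi(2)+\varepsilon}$ for all $\varepsilon>0$.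
   Context: The limit defining $\alpha$ is known to exist. For functions $f,g\colon\mathbb{N}\to\mathbb{R}$, $f(n)\preceq g(n)$ means there is a constant $C$ such that $f(n)\le C\,g(Cn)$ for all $n\in\mathbb{N}$. *)

(* Defs.v *)
From HB Require Import structures.
From mathcomp Require Import all_boot all_order all_algebra.
From mathcomp Require Import all_classical all_reals all_analysis.
Set Implicit Arguments. Unset Strict Implicit. Unset Printing Implicit Defensive.
Import Order.TTheory GRing.Theory Num.Theory.

(* The free group F_2 on generators a, b, modelled as freely reduced words. *)
(* A letter is (g, s): g = false for a, true for b; s = true for an inverse. *)
Definition letter := (bool * bool)%type.
Definition word := seq letter.

Definition linv (x : letter) : letter := (x.1, ~~ x.2).

Definition reduce_cons (x : letter) (w : word) : word :=
  match w with
  | y :: w' => if y == linv x then w' else x :: w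
  | [::] => [:: x]
  end.

Definition reduce (w : word) : word := foldr reduce_cons [::] w.

Definition reduced (w : word) : Prop := reduce w = w.

Definition fmul (u v : word) : word := reduce (u ++ v).
Definition finv (w : word) : word := rev (map linv w).
Definition fcomm (x y : word) : word := fmul (fmul (finv x) (finv y)) (fmul x y).

Definition wlen (w : word) : nat := size w.

Inductive gen (S : word -> Prop) : word -> Prop :=
  | gen_one : gen S [::]
  | gen_in x : S x -> gen S x
  | gen_inv x : gen S x -> gen S (finv x)
  | gen_mul x y : gen S x -> gen S y -> gen S (fmul x y).

(* lcs k = gamma_{k+1}(F_2) *)
Fixpoint lcs (k : nat) : word -> Prop :=
  match k with
  | 0 => reduced
  | k'.+1 => gen (fun c => exists x y, lcs k' x /\ reduced y /\ c = fcomm x y)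
  end.

(* gamma_n(F_2), n >= 1 (gamma_0 is set to gamma_1 by convention) *)
Definition gamma (n : nat) : word -> Prop := lcs n.-1.

(* alpha(n) = min { l(w) | w in gamma_n(F_2) \ {e} } (0 if the set were empty) *)
Definition alpha_pred (n : nat) : pred nat :=
  fun k => `[< exists w, gamma n w /\ w <> [::] /\ wlen w = k >].

Definition alpha (n : nat) : nat :=
  match pselect (exists k, alpha_pred n k) with
  | left h => ex_minn h
  | right _ => 0%N
  end.

Local Open Scope ring_scope.

Definition log2 {R : realType} (x : R) : R := ln x / ln 2.

Definition golden_ratio {R : realType} : R := (1 + Num.sqrt 5) / 2.

(* Main.v *)
Require Import Defs.
From HB Require Import structures.
From mathcomp Require Import all_boot all_order all_algebra.
From mathcomp Require Import all_classical all_reals all_analysis.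
From mathcomp Require Import zify ring lra.
Import Order.TTheory GRing.Theory Num.Theory numFieldNormedType.Exports.
Import Defs.
Set Implicit Arguments. Unset Strict Implicit. Unset Printing Implicit Defensive.


Fixpoint irr (w : word) : bool :=
  match w with
  | x :: ((y :: _) as w') => (y != linv x) && irr w'
  | _ => true
  end.

Lemma linvK x : linv (linv x) = x.
Proof. by case: x => a b; rewrite /linv /= negbK. Qed.

Lemma linv_inj : injective linv.
Proof. exact: can_inj linvK. Qed.

Lemma irr_tail x w : irr (x :: w) -> irr w.
Proof. by case: w => //= y w /andP[]. Qed.

Lemma rc_irr x s : irr s -> irr (reduce_cons x s).
Proof.
case: s => [|y s] //= Hs.
case: ifP => [_|/negbT Hy]; first exact: irr_tail Hs.
by rewrite /= Hy Hs.
Qed.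

Lemma reduce_irr w : irr (reduce w).
Proof. by elim: w => [|x w IH] //=; apply: rc_irr. Qed.

Lemma irr_reduce w : irr w -> reduce w = w.
Proof.
elim: w => [|x w IH] //= Hw.
rewrite IH; last exact: irr_tail Hw.
case: w Hw {IH} => [|y w] //= /andP[Hy _].
by rewrite (negbTE Hy).
Qed.

Lemma reduceK w : reduce (reduce w) = reduce w.
Proof. exact/irr_reduce/reduce_irr. Qed.

Lemma rcK x s : irr s -> reduce_cons x (reduce_cons (linv x) s) = s.
Proof.
case: s => [|y s] /=; first by rewrite eqxx.
case: ifP => [/eqP Hy|/negbT Hy] Hs.
  rewrite linvK in Hy; subst y.
  case: s Hs => [|z s] //= /andP[Hz _].
  by rewrite (negbTE Hz).
by rewrite /= eqxx.
Qed.

Lemma foldr_rc_irr t u : irr t -> irr (foldr reduce_cons t u).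
Proof. by move=> Ht; elim: u => //= x u IH; apply: rc_irr. Qed.

Lemma foldr_rc_cons t x s : irr t ->
  foldr reduce_cons t (reduce_cons x s) = reduce_cons x (foldr reduce_cons t s).
Proof.
move=> Ht; case: s => [|y s] //.
rewrite [reduce_cons x _]/=.
case: ifP => [/eqP ->|] //.
by rewrite [foldr _ _ (_ :: _)]/= rcK // foldr_rc_irr.
Qed.

Lemma foldr_rc_reduce t u : irr t ->
  foldr reduce_cons t (reduce u) = foldr reduce_cons t u.
Proof.
move=> Ht; elim: u => [|x u IH] //=.
by rewrite foldr_rc_cons // IH.
Qed.

Lemma reduce_cat u v : reduce (u ++ v) = foldr reduce_cons (reduce v) u.
Proof. by rewrite /reduce foldr_cat. Qed.

Lemma reduce_catl u v : reduce (reduce u ++ v) = reduce (u ++ v).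
Proof. by rewrite !reduce_cat foldr_rc_reduce // reduce_irr. Qed.

Lemma reduce_catr u v : reduce (u ++ reduce v) = reduce (u ++ v).
Proof. by rewrite !reduce_cat reduceK. Qed.

Lemma finv_cat u v : finv (u ++ v) = finv v ++ finv u.
Proof. by rewrite /finv map_cat rev_cat. Qed.

Lemma finvK : involutive finv.
Proof.
move=> u; rewrite /finv map_rev revK -map_comp.
rewrite (eq_map (g := id)) ?map_id // => x /=; exact: linvK.
Qed.

Lemma finv_cons x u : finv (x :: u) = finv u ++ [:: linv x].
Proof. by rewrite -cat1s finv_cat. Qed.

Lemma foldr_finv t u : irr t ->
  foldr reduce_cons (foldr reduce_cons t u) (finv u) = t.
Proof.
move=> Ht; elim: u => [|x u IH] //.
rewrite finv_cons foldr_cat.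
have -> : foldr reduce_cons (foldr reduce_cons t (x :: u)) [:: linv x]
   = foldr reduce_cons t u.
  have := @rcK (linv x) (foldr reduce_cons t u) (foldr_rc_irr _ Ht).
  by rewrite linvK.
exact: IH.
Qed.

Lemma cancel_l u v : reduce (finv u ++ u ++ v) = reduce v.
Proof.
rewrite catA reduce_cat foldr_cat foldr_finv //; exact: reduce_irr.
Qed.

Lemma cancel_r u v : reduce (u ++ finv u ++ v) = reduce v.
Proof. by rewrite -{1}(finvK u) cancel_l. Qed.

Definition junc (s t : word) : bool :=
  match s, t with
  | x :: s', y :: _ => y != linv (last x s')
  | _, _ => true
  end.

Lemma irr_cat s t : irr (s ++ t) = [&& irr s, irr t & junc s t].
Proof.
elim: s => [|x s IH] /=; first by rewrite andbT.
case: s IH => [|y s] IH.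
  by clear IH; case: t => [|z t] //=; rewrite andbC.
transitivity ((y != linv x) && irr ((y :: s) ++ t)); first by [].
rewrite IH -!andbA.
by case: t {IH} => [|z t].
Qed.

Lemma last_finv x u : last x (finv u) = if u is y :: _ then linv y else x.
Proof. by case: u => [|y u] //; rewrite finv_cons last_cat. Qed.

Lemma junc_cons s z t : s != [::] -> junc s (z :: t) = (z != linv (last z s)).
Proof. by case: s. Qed.

Lemma irr_finv u : irr (finv u) = irr u.
Proof.
elim: u => [|x u IH] //; rewrite finv_cons irr_cat IH.
case: u {IH} => [|y u]; first by [].
rewrite junc_cons; last by rewrite -size_eq0 /finv size_rev size_map.
rewrite last_finv linvK /= andbC; congr (_ && _).
by rewrite eq_sym -(inj_eq linv_inj) linvK.
Qed.

Lemma finv_reduce w : finv (reduce w) = reduce (finv w).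
Proof.
have H : reduce (finv w) = reduce (finv (reduce w)).
  rewrite -(cancel_l w (finv (reduce w))) -reduce_catr.
  have -> : reduce (w ++ finv (reduce w)) = [::].
    by rewrite -reduce_catl -[_ ++ finv _]cats0 -catA cancel_r.
  by rewrite cats0.
by rewrite H (irr_reduce (w := finv (reduce w))) // irr_finv reduce_irr.
Qed.


Definition sym := (nat * bool)%type.
Definition sinv (p : sym) : sym := (p.1, ~~ p.2).
Definition sinvs (s : seq sym) : seq sym := rev (map sinv s).
Definition src (p : sym) (s : seq sym) : seq sym :=
  match s with
  | q :: s' => if q == sinv p then s' else p :: s
  | [::] => [:: p]
  end.
Definition sred (s : seq sym) := foldr src [::] s.

Definition atom (env : seq word) (p : sym) : word :=
  if p.2 then finv (nth [::] env p.1) else nth [::] env p.1.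
Definition eval env (s : seq sym) : word := reduce (flatten (map (atom env) s)).

Lemma eval_cons env p s : eval env (p :: s) = reduce (atom env p ++ eval env s).
Proof. by rewrite /eval reduce_catr. Qed.

Lemma atom_sinv env p : atom env (sinv p) = finv (atom env p).
Proof. by case: p => i [] //=; rewrite /atom /= finvK. Qed.

Lemma eval_src env p s : eval env (src p s) = eval env (p :: s).
Proof.
case: s => [|q s] //=.
case: ifP => [/eqP ->|] //.
by rewrite /eval /= atom_sinv cancel_r.
Qed.

Lemma eval_sred env s : eval env (sred s) = eval env s.
Proof.
elim: s => [|p s IH] //=.
by rewrite eval_src !eval_cons IH.
Qed.

Inductive gexp := GA of nat | GM of gexp & gexp | GI of gexp | GE | GC of gexp & gexp.

Fixpoint ginterp env e : word :=
  match e with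
  | GA i => nth [::] env i
  | GM e1 e2 => fmul (ginterp env e1) (ginterp env e2)
  | GI e => finv (ginterp env e)
  | GE => [::]
  | GC e1 e2 => fcomm (ginterp env e1) (ginterp env e2)
  end.

Fixpoint gflat e : seq sym :=
  match e with
  | GA i => [:: (i, false)]
  | GM e1 e2 => gflat e1 ++ gflat e2
  | GI e => sinvs (gflat e)
  | GE => [::]
  | GC e1 e2 => (sinvs (gflat e1) ++ sinvs (gflat e2)) ++ (gflat e1 ++ gflat e2)
  end.

Lemma eval_cat env s t : eval env (s ++ t) = fmul (eval env s) (eval env t).
Proof. by rewrite /fmul /eval reduce_catl reduce_catr map_cat flatten_cat. Qed.

Lemma flatten_sinvs env s :
  flatten (map (atom env) (sinvs s)) = finv (flatten (map (atom env) s)).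
Proof.
elim: s => [|p s IH] //=.
by rewrite /sinvs map_cons rev_cons map_rcons -cats1 flatten_cat -/(sinvs s) IH
  /= cats0 atom_sinv finv_cat.
Qed.

Lemma eval_sinvs env s : eval env (sinvs s) = finv (eval env s).
Proof. by rewrite /eval flatten_sinvs finv_reduce. Qed.

Definition redb (w : word) : bool := reduce w == w.

Lemma ginterp_eval env e : all redb env -> ginterp env e = eval env (gflat e).
Proof.
move=> Henv; elim: e => [i|e1 IH1 e2 IH2|e IH||e1 IH1 e2 IH2] /=.
- rewrite /eval /= cats0 /atom /=.
  case: (ltnP i (size env)) => Hi.
    by apply/esym/eqP; exact: (all_nthP [::] Henv).
  by rewrite nth_default.
- by rewrite eval_cat IH1 IH2.
- by rewrite eval_sinvs IH.
- by [].
- by rewrite /fcomm !eval_cat !eval_sinvs IH1 IH2.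
Qed.

Lemma gexp_eq env e1 e2 : all redb env ->
  sred (gflat e1) == sred (gflat e2) -> ginterp env e1 = ginterp env e2.
Proof.
move=> Henv /eqP H.
by rewrite !ginterp_eval // -eval_sred H eval_sred.
Qed.


Definition conj (x h : word) : word := fmul (fmul (finv h) x) h.
Definition Gconj e h := GM (GM (GI h) e) h.

Ltac envok := rewrite /= ?andbT; repeat (apply/andP; split); apply/eqP; assumption.
Ltac gid env e1 e2 :=
  apply: (@gexp_eq env e1 e2); [envok | by []].

Lemma red_mul x y : reduced (fmul x y).
Proof. exact: reduceK. Qed.

Lemma red_inv x : reduced x -> reduced (finv x).
Proof. by rewrite /reduced -finv_reduce => ->. Qed.

Lemma red_conj x h : reduced (conj x h).
Proof. exact: red_mul. Qed.

Lemma red_comm x y : reduced (fcomm x y).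
Proof. exact: red_mul. Qed.

Lemma gen_red S x : (forall c, S c -> reduced c) -> gen S x -> reduced x.
Proof.
move=> HS; elim => [|c Hc|y _ IH|y z _ _ _ _].
- by [].
- exact: HS.
- exact: red_inv.
- exact: red_mul.
Qed.

Lemma lcs_red k x : lcs k x -> reduced x.
Proof.
case: k => [|k] //= H; apply: gen_red H.
by move=> c [a [b [_ [_ ->]]]]; apply: red_comm.
Qed.

Lemma lcs_one k : lcs k [::].
Proof. by case: k => [|k] //; apply: gen_one. Qed.

Lemma lcs_inv k x : lcs k x -> lcs k (finv x).
Proof. by case: k => [|k] /=; [apply: red_inv | apply: gen_inv]. Qed.

Lemma lcs_mul k x y : lcs k x -> lcs k y -> lcs k (fmul x y).
Proof. by case: k => [|k] /=; [move=> *; apply: red_mul | apply: gen_mul]. Qed.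

Lemma lcs_conj k x h : lcs k x -> reduced h -> lcs k (conj x h).
Proof.
elim: k x h => [|k IH] x h; first by move=> *; apply: red_conj.
move=> Hx Hh; have Hxr := lcs_red Hx; move: Hx Hxr => /= Hx.
elim: Hx => [|c Hc|y Hy IHy|y z Hy IHy Hz IHz] Hr.
- have -> : conj [::] h = [::] by gid [:: h] (Gconj GE (GA 0)) GE.
  exact: gen_one.
- case: Hc => [a [b [Ha [Hb ->]]]].
  have Ha' := lcs_red Ha.
  have -> : conj (fcomm a b) h = fcomm (conj a h) (conj b h).
    by gid [:: a; b; h] (Gconj (GC (GA 0) (GA 1)) (GA 2))
      (GC (Gconj (GA 0) (GA 2)) (Gconj (GA 1) (GA 2))).
  apply: gen_in; exists (conj a h), (conj b h); split; first exact: IH.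
  by split; first exact: red_conj.
- have Hyr : reduced y.
    by rewrite -[y]finvK; apply: red_inv.
  have -> : conj (finv y) h = finv (conj y h).
    by gid [:: y; h] (Gconj (GI (GA 0)) (GA 1)) (GI (Gconj (GA 0) (GA 1))).
  by apply: gen_inv; apply: IHy.
- have Hyr : reduced y.
    by apply: (gen_red _ Hy) => c [a [b [_ [_ ->]]]]; apply: red_comm.
  have Hzr : reduced z.
    by apply: (gen_red _ Hz) => c [a [b [_ [_ ->]]]]; apply: red_comm.
  have -> : conj (fmul y z) h = fmul (conj y h) (conj z h).
    by gid [:: y; z; h] (Gconj (GM (GA 0) (GA 1)) (GA 2))
      (GM (Gconj (GA 0) (GA 2)) (Gconj (GA 1) (GA 2))).
  by apply: gen_mul; [apply: IHy | apply: IHz].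
Qed.

Lemma lcs_comm1 i x y : lcs i x -> reduced y -> lcs i.+1 (fcomm x y).
Proof. by move=> Hx Hy; apply: gen_in; exists x, y. Qed.

Lemma lcs_comm j : forall i x y, lcs i x -> lcs j y -> lcs (i + j).+1 (fcomm x y).
Proof.
elim: j => [|j IHj] i x y Hx.
  by rewrite addn0; apply: lcs_comm1.
move=> Hy; have Hyr := lcs_red Hy; have Hxr := lcs_red Hx.
have Hy' : gen (fun c => exists x y, lcs j x /\ reduced y /\ c = fcomm x y) y := Hy.
clear Hy; move: Hyr.
elim: Hy' => [|c Hc|w Hw IHy|w z Hw IHy Hz IHz] Hr.
- have -> : fcomm x [::] = [::] by gid [:: x] (GC (GA 0) GE) GE.
  exact: lcs_one.
- case: Hc => [u [v [Hu [Hv ->]]]].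
  have Hur := lcs_red Hu.
  have -> : fcomm x (fcomm u v) =
    conj (fmul (conj (fcomm (fcomm (finv v) (finv x)) u) x)
               (conj (fcomm (fcomm x (finv u)) (finv v)) u)) v.
    by gid [:: x; u; v] (GC (GA 0) (GC (GA 1) (GA 2)))
      (Gconj (GM (Gconj (GC (GC (GI (GA 2)) (GI (GA 0))) (GA 1)) (GA 0))
                 (Gconj (GC (GC (GA 0) (GI (GA 1))) (GI (GA 2))) (GA 1))) (GA 2)).
  apply: lcs_conj => //; apply: lcs_mul; apply: lcs_conj => //.
  + have -> : fcomm (finv v) (finv x) = finv (fcomm (finv x) (finv v)).
      by gid [:: x; v] (GC (GI (GA 1)) (GI (GA 0))) (GI (GC (GI (GA 0)) (GI (GA 1)))).
    rewrite addnS -addSn; apply: IHj => //.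
    apply: lcs_inv; apply: lcs_comm1; first exact: lcs_inv.
    exact: red_inv.
  + rewrite addnS; apply: lcs_comm1; last exact: red_inv.
    by apply: IHj => //; apply: lcs_inv.
- have Hyr : reduced w by rewrite -[w]finvK; apply: red_inv.
  have -> : fcomm x (finv w) = conj (finv (fcomm x w)) (finv w).
    by gid [:: x; w] (GC (GA 0) (GI (GA 1))) (Gconj (GI (GC (GA 0) (GA 1))) (GI (GA 1))).
  apply: lcs_conj; last exact: red_inv.
  by apply: lcs_inv; apply: IHy.
- have Hyr : reduced w.
    by apply: (gen_red _ Hw) => c [a [b [_ [_ ->]]]]; apply: red_comm.
  have Hzr : reduced z.
    by apply: (gen_red _ Hz) => c [a [b [_ [_ ->]]]]; apply: red_comm.
  have -> : fcomm x (fmul w z) = fmul (fcomm x z) (conj (fcomm x w) z).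
    by gid [:: x; w; z] (GC (GA 0) (GM (GA 1) (GA 2)))
      (GM (GC (GA 0) (GA 2)) (Gconj (GC (GA 0) (GA 1)) (GA 2))).
  apply: lcs_mul; first exact: IHz.
  by apply: lcs_conj => //; apply: IHy.
Qed.


Definition tl0 (g : bool) : word :=
  if g then [:: (false,false); (true,true); (false,true); (true,false)]
  else [:: (false,true); (true,false); (false,false); (true,true)].
Definition tl (x : letter) : word := if x.2 then finv (tl0 x.1) else tl0 x.1.
Definition flat (w : word) : word := flatten (map tl w).
Definition tau (w : word) : word := reduce (flat w).

Lemma tl_linv x : tl (linv x) = finv (tl x).
Proof. by case: x => g [] //=; rewrite /tl /= finvK. Qed.

Lemma flat_cons x w : flat (x :: w) = tl x ++ flat w.
Proof. by []. Qed.

Lemma flat_rc x s : reduce (flat (reduce_cons x s)) = reduce (tl x ++ flat s).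
Proof.
case: s => [|y s] //.
rewrite [reduce_cons x _]/=; case: ifP => [/eqP ->|] //.
by rewrite flat_cons tl_linv cancel_r.
Qed.

Lemma tau_reduce w : tau (reduce w) = tau w.
Proof.
elim: w => [|x w IH] //.
rewrite /tau [reduce (x :: w)]/= flat_rc -reduce_catr.
by rewrite -/(tau (reduce w)) IH /tau reduce_catr.
Qed.

Lemma flat_cat u v : flat (u ++ v) = flat u ++ flat v.
Proof. by rewrite /flat map_cat flatten_cat. Qed.

Lemma tau_mul u v : tau (fmul u v) = fmul (tau u) (tau v).
Proof. by rewrite /fmul tau_reduce /tau flat_cat reduce_catl reduce_catr. Qed.

Lemma flat_finv u : flat (finv u) = finv (flat u).
Proof.
elim: u => [|x u IH] //.
by rewrite finv_cons flat_cat IH flat_cons finv_cat /flat /= cats0 tl_linv.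
Qed.

Lemma tau_inv u : tau (finv u) = finv (tau u).
Proof. by rewrite /tau flat_finv finv_reduce. Qed.

Lemma tau_comm x y : tau (fcomm x y) = fcomm (tau x) (tau y).
Proof. by rewrite /fcomm !tau_mul !tau_inv. Qed.

Lemma tau_conj x h : tau (conj x h) = conj (tau x) (tau h).
Proof. by rewrite /conj !tau_mul !tau_inv. Qed.

Lemma tau_red w : reduced (tau w).
Proof. exact: reduceK. Qed.

Fixpoint useq (k : nat) : word :=
  match k with
  | 0 => [:: (false,false)]
  | S k1 => match k1 with
            | 0 => [:: (true,false); (false,true)]
            | S k2 => fcomm (useq k1) (useq k2)
            end
  end.

Definition gtau : word := [:: (true,true); (false,false)].

Lemma useq_red k : reduced (useq k).
Proof. by case: k => [|[|k]] //; apply: red_comm. Qed.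

Lemma tau_u k : tau (useq k) = conj (useq k.+2) gtau.
Proof.
suff : tau (useq k) = conj (useq k.+2) gtau /\
       tau (useq k.+1) = conj (useq k.+3) gtau by case.
elim: k => [|k [IH1 IH2]]; first by split; vm_compute.
split => //.
have -> : useq k.+2 = fcomm (useq k.+1) (useq k) by [].
rewrite tau_comm IH1 IH2.
have Hg : reduced gtau by vm_compute.
have H3 := useq_red k.+3; have H4 := useq_red k.+2.
have -> : useq k.+4 = fcomm (useq k.+3) (useq k.+2) by [].
by gid [:: useq k.+3; useq k.+2; gtau] (GC (Gconj (GA 0) (GA 2)) (Gconj (GA 1) (GA 2)))
   (Gconj (GC (GA 0) (GA 1)) (GA 2)).
Qed.

Fixpoint fib (n : nat) : nat :=
  match n with
  | 0 => 0
  | S n1 => match n1 with 0 => 1 | S n2 => fib n1 + fib n2 end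
  end.

Lemma fibSS n : fib n.+2 = fib n.+1 + fib n.
Proof. by []. Qed.

Lemma fib_pos n : 0 < fib n.+1.
Proof.
suff : 0 < fib n.+1 /\ 0 < fib n.+2 by case.
elim: n => [|n [H1 H2]] //; split => //; rewrite fibSS; lia.
Qed.

Lemma fib_ge n : n <= fib n.+1.
Proof.
suff : n <= fib n.+1 /\ n.+1 <= fib n.+2 by case.
elim: n => [|n [H1 H2]] //; split => //.
rewrite fibSS; case: n H1 H2 => [|n] H1 H2 //; lia.
Qed.

Lemma useq_lcs k : lcs (fib k.+1).-1 (useq k).
Proof.
suff : lcs (fib k.+1).-1 (useq k) /\ lcs (fib k.+2).-1 (useq k.+1) by case.
elim: k => [|k [IH1 IH2]]; first by split; vm_compute.
split => //.
have -> : useq k.+2 = fcomm (useq k.+1) (useq k) by [].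
have -> : (fib k.+3).-1 = ((fib k.+2).-1 + (fib k.+1).-1).+1.
  have := fib_pos k; have := fib_pos k.+1; rewrite (fibSS k.+1); lia.
exact: lcs_comm.
Qed.

Lemma iter_tau_conj j x h :
  iter j tau (conj x h) = conj (iter j tau x) (iter j tau h).
Proof. by elim: j => [|j IH] //=; rewrite IH tau_conj. Qed.

Lemma iter_red j h : reduced h -> reduced (iter j tau h).
Proof. by case: j => [|j] //= _; apply: tau_red. Qed.

Lemma iter_tau_lcs j k : lcs (fib (k + 2 * j).+1).-1 (iter j tau (useq k)).
Proof.
elim: j k => [|j IH] k; first by rewrite muln0 addn0; apply: useq_lcs.
rewrite iterSr tau_u iter_tau_conj.
apply: lcs_conj; last by apply: iter_red; vm_compute.
have -> : k + 2 * j.+1 = k.+2 + 2 * j by lia.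
exact: IH.
Qed.

Lemma irr_flat w : irr w -> irr (flat w).
Proof.
elim: w => [|x w IH] // Hw.
rewrite flat_cons irr_cat IH ?(irr_tail Hw) //=.
case: w Hw {IH} => [|y w] /= Hw.
  by case: x {Hw} => [[] []].
case/andP: Hw => Hxy _.
by case: x Hxy => [[] []]; case: y => [[] []].
Qed.

Lemma size_flat w : size (flat w) = 4 * size w.
Proof.
elim: w => [|x w IH] //; rewrite flat_cons size_cat IH.
by case: x => [[] []] /=; lia.
Qed.

Lemma size_iter_tau j : size (iter j tau (useq 0)) = 4 ^ j /\ irr (iter j tau (useq 0)).
Proof.
elim: j => [|j [IH1 IH2]]; first by split.
rewrite iterS /tau irr_reduce; last exact: irr_flat.
split; first by rewrite size_flat IH1 expnS.
exact: irr_flat.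
Qed.


Lemma alpha_bound j : (1 <= alpha (fib (2 * j).+1) <= 4 ^ j)%N.
Proof.
set n := fib _.
have [Hs Hi] := size_iter_tau j.
have Hw : alpha_pred n (4 ^ j).
  apply/asboolP; exists (iter j tau (useq 0)); split.
    by have := iter_tau_lcs j 0; rewrite add0n.
  split; last by [].
  by move=> E; move: Hs; rewrite E /= => /esym/eqP; rewrite expn_eq0.
rewrite /alpha; case: pselect => [h|nh]; last by exfalso; apply: nh; exists (4 ^ j).
case: ex_minnP => m Hm Hmin.
apply/andP; split; last exact: Hmin.
move/asboolP: Hm => [w [_ [Hw0 <-]]].
by rewrite /wlen lt0n size_eq0; apply/eqP.
Qed.

Local Open Scope classical_set_scope.
Local Open Scope ring_scope.
Unset Implicit Arguments.


Lemma sqrt5_gt1 (R : realType) : 1 < Num.sqrt (5 : R).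
Proof. by rewrite -{1}(@sqrtr1 R) ltr_sqrt // ltr1n. Qed.

Lemma phi_gt1 (R : realType) : 1 < (golden_ratio : R).
Proof.
rewrite /golden_ratio ltr_pdivlMr // mul1r.
by have := sqrt5_gt1 R; lra.
Qed.

Lemma phi_sq (R : realType) : (golden_ratio : R) ^+ 2 = golden_ratio + 1.
Proof.
rewrite /golden_ratio expr_div_n sqrrD sqr_sqrtr // expr1n.
by field.
Qed.

Lemma fib_lb (R : realType) k : (golden_ratio : R) ^+ k <= (fib k.+2)%:R.
Proof.
suff : (golden_ratio : R) ^+ k <= (fib k.+2)%:R /\
       (golden_ratio : R) ^+ k.+1 <= (fib k.+3)%:R by case.
elim: k => [|k [H1 H2]].
  split; first by rewrite expr0.
  rewrite expr1 /golden_ratio /= ler_pdivrMr //.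
  have : Num.sqrt (5 : R) <= 3.
    have h := @sqr_sqrtr R 5 (ler0n _ _); have h0 := @sqrtr_ge0 R 5.
    rewrite expr2 in h; nra.
  by rewrite /= mulr_natr; lra.
split => //.
rewrite (fibSS k.+2) natrD exprS.
have -> : (golden_ratio : R) * golden_ratio ^+ k.+1 = golden_ratio ^+ k.+1 + golden_ratio ^+ k.
  by rewrite exprS mulrA -expr2 phi_sq mulrDl mul1r.
by apply: lerD.
Qed.


Lemma ratio_bound (R : realType) (j : nat) : (0 < j)%N ->
  log2 ((alpha (fib (2 * j).+1))%:R : R) / log2 ((fib (2 * j).+1)%:R : R) <=
  ln 2 / ln golden_ratio + (ln 2 / ln golden_ratio) / (2 * j - 1)%:R.
Proof.
move=> Hj.
set A := alpha _; set n := fib _.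
have /andP[HA1 HA4] := alpha_bound j; rewrite -/n -/A in HA1 HA4.
have Hphi := @phi_gt1 R.
have lp : 0 < ln (golden_ratio : R) by apply: ln_gt0.
have l2 : 0 < ln (2 : R) by apply: ln_gt0; rewrite ltr1n.
set m : R := (2 * j - 1)%:R.
have Hm : 1 <= m by rewrite /m ler1n; lia.
have Hm2 : (2 * j)%:R = m + 1 :> R.
  by rewrite /m natr1; congr (_%:R); lia.
have HA0 : 1 <= (A%:R : R) by rewrite ler1n.
have lnA0 : 0 <= ln (A%:R : R) by apply: ln_ge0.
have lnA : ln (A%:R : R) <= (m + 1) * ln 2.
  apply: (@le_trans _ _ (ln ((4 ^ j)%:R : R))).
    by rewrite ler_ln ?posrE ?ler_nat // (lt_le_trans ltr01).
  have -> : ((4 ^ j)%:R : R) = 2 ^+ (2 * j).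
    by rewrite natrX exprM; congr (_ ^+ _); rewrite -natrX.
  by rewrite lnXn // -[ln 2 *+ _]mulr_natl Hm2.
have lnN : m * ln golden_ratio <= ln (n%:R : R).
  have -> : n = fib (2 * j - 1).+2 by rewrite /n; congr fib; lia.
  have -> : m * ln (golden_ratio : R) = ln (golden_ratio ^+ (2 * j - 1)).
    by rewrite lnXn ?mulr_natl // (lt_trans ltr01).
  rewrite ler_ln ?posrE; first exact: fib_lb.
    by apply: exprn_gt0; apply: (lt_trans ltr01).
  apply: (lt_le_trans _ (fib_lb _ _)).
  by apply: exprn_gt0; apply: (lt_trans ltr01).
have lnNp : 0 < ln (n%:R : R) by apply: (lt_le_trans _ lnN); apply: mulr_gt0 => //; lra.
have -> : log2 (A%:R : R) / log2 (n%:R : R) = ln (A%:R : R) / ln (n%:R : R).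
  by rewrite /log2; field; apply/andP; split; apply: lt0r_neq0.
set B := ln 2 / ln golden_ratio + (ln 2 / ln golden_ratio) / m.
have hB : B * (m * ln golden_ratio) = (m + 1) * ln 2.
  by rewrite /B; field; apply/andP; split; apply: lt0r_neq0 => //; lra.
have B0 : 0 <= B.
  rewrite /B; apply: addr_ge0; apply: divr_ge0; try apply: divr_ge0; lra.
rewrite ler_pdivrMr //; apply: (le_trans lnA); rewrite -hB.
exact: ler_wpM2l.
Qed.

Theorem theorem1p1 (R : realType) (a : R) :
  (fun n : nat => log2 ((alpha n)%:R : R) / log2 (n%:R : R)) @ \oo --> a ->
  a <= ln 2 / ln golden_ratio.
Proof.
move=> H; apply/ler_addgt0Pr => e He.
set c := ln 2 / ln golden_ratio.
have lp : 0 < ln (golden_ratio : R) by apply: ln_gt0; apply: phi_gt1.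
have l2 : 0 < ln (2 : R) by apply: ln_gt0; rewrite ltr1n.
have c0 : 0 < c by apply: divr_gt0.
have e2 : 0 < e / 2 by apply: divr_gt0.
have := (cvgrPdist_lt _ _).1 H (e / 2) e2.
case => N /= _ HN.
set M := Num.Def.archi_bound (c / (e / 2)).
have HM : c / (e / 2) < M%:R by apply: archi_boundP; apply: divr_ge0; lra.
set j := (N + M).+1.
have Hj : (0 < j)%N by [].
have := ratio_bound R j Hj.
set n := fib _.
have Hn : (N <= n)%N by apply: (leq_trans _ (fib_ge _)); rewrite /j; lia.
have := HN n Hn; rewrite /=.
set r := log2 _ / log2 _.
set m : R := (2 * j - 1)%:R.
have HmM : (M%:R : R) <= m by rewrite /m ler_nat /j; lia.
have Hm0 : 0 < m by rewrite /m ltr0n /j; lia.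
move=> Hd Hr; rewrite -/c in Hr.
have h1 : a - r <= e / 2 by apply: (le_trans (ler_norm _)); apply: ltW.
have h2 : c / m <= e / 2.
  rewrite ler_pdivrMr //.
  have := lt_le_trans HM HmM; rewrite ltr_pdivrMr // => h.
  by rewrite mulrC; apply: ltW.
lra.
Qed.
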